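(* Let $c,a,b\in V$ with $c=a+b$. The following three statements are equivalent: (1) $c=a+b$ is an $X2$-decomposition; (2) $c=a+b$ is a $2Y$-decomposition; (3) $\langle a,b\rangle=\|a\|_X\|b\|_Y$.
   Context: $V$ is a finite dimensional real vector space with a positive definite symmetric bilinear form $\langle\cdot,\cdot\rangle$ and euclidean norm $\|v\|_2=\sqrt{\langle v,v\rangle}$. $\|\cdot\|_X$ is a norm on $V$ and $\|\cdot\|_Y$ is its dual norm, $\|v\|_Y=\max\{\langle v,w\rangle : w\in V,\ \|w\|_X=1\}$. For two norms $\|\cdot\|_P,\|\cdot\|_Q$ on $V$ (each one of $X$, $Y$, $2$), a decomposition $c=a+b$ is called a $PQ$-decomposition if for every decomposition $c=a'+b'$ we have $\|a'\|_P>\|a\|_P$, or $\|b'\|_Q>\|b\|_Q$, or $(\|a'\|_P,\|b'\|_Q)=(\|a\|_P,\|b\|_Q)$. *)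

(* Defs.v *)
(* real vector space V = R^n (functions Fin.t n -> R),
   carrying an ARBITRARY positive definite symmetric bilinear form. *)
From Stdlib Require Import Reals.
From Stdlib Require Fin.
Open Scope R_scope.

Definition vec (n : nat) := Fin.t n -> R.
Definition vzero {n} : vec n := fun _ => 0.
Definition vadd {n} (u v : vec n) : vec n := fun i => u i + v i.
Definition vscal {n} (r : R) (u : vec n) : vec n := fun i => r * u i.

Definition is_inner_product {n} (ip : vec n -> vec n -> R) : Prop :=
  (forall u v, ip u v = ip v u) /\
  (forall u v w, ip (vadd u v) w = ip u w + ip v w) /\
  (forall r u w, ip (vscal r u) w = r * ip u w) /\
  (forall v, v <> vzero -> 0 < ip v v).

Definition euclid {n} (ip : vec n -> vec n -> R) (v : vec n) : R :=
  sqrt (ip v v).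

Definition is_norm {n} (N : vec n -> R) : Prop :=
  (forall v, N v = 0 -> v = vzero) /\
  (forall r v, N (vscal r v) = Rabs r * N v) /\
  (forall u v, N (vadd u v) <= N u + N v).

Definition is_dual_norm {n} (ip : vec n -> vec n -> R) (X Y : vec n -> R) : Prop :=
  forall v,
    (exists w, X w = 1 /\ ip v w = Y v) /\
    (forall w, X w = 1 -> ip v w <= Y v).

Definition is_PQ_decomposition {n} (P Q : vec n -> R) (c a b : vec n) : Prop :=
  c = vadd a b /\
  forall a' b', c = vadd a' b' ->
    P a' > P a \/ Q b' > Q b \/ (P a' = P a /\ Q b' = Q b).

(* Main.v *)
Require Import Defs.
From Stdlib Require Import Reals Lra Psatz List FunctionalExtensionality Classical.
Open Scope R_scope.

Ltac vext := let i := fresh "i" in extensionality i; unfold vadd, vscal, vzero.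


Lemma ip_sym {n} {ip : vec n -> vec n -> R} (h : is_inner_product ip) u v : ip u v = ip v u.
Proof. apply h. Qed.
Lemma ip_addl {n} {ip : vec n -> vec n -> R} (h : is_inner_product ip) u v w :
  ip (vadd u v) w = ip u w + ip v w.
Proof. apply h. Qed.
Lemma ip_scall {n} {ip : vec n -> vec n -> R} (h : is_inner_product ip) r u w :
  ip (vscal r u) w = r * ip u w.
Proof. apply h. Qed.
Lemma ip_addr {n} {ip : vec n -> vec n -> R} (h : is_inner_product ip) u v w :
  ip w (vadd u v) = ip w u + ip w v.
Proof. rewrite !(ip_sym h w). apply h. Qed.
Lemma ip_scalr {n} {ip : vec n -> vec n -> R} (h : is_inner_product ip) r u w :
  ip w (vscal r u) = r * ip w u.
Proof. rewrite !(ip_sym h w). apply h. Qed.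
Lemma ip_zerol {n} {ip : vec n -> vec n -> R} (h : is_inner_product ip) w :
  ip vzero w = 0.
Proof.
  replace (@vzero n) with (vscal 0 (@vzero n)) by (vext; ring).
  rewrite (ip_scall h); ring.
Qed.
Lemma ip_zeror {n} {ip : vec n -> vec n -> R} (h : is_inner_product ip) w :
  ip w vzero = 0.
Proof. rewrite (ip_sym h); apply (ip_zerol h). Qed.
Lemma ip_nonneg {n} {ip : vec n -> vec n -> R} (h : is_inner_product ip) v :
  0 <= ip v v.
Proof.
  destruct (classic (v = vzero)) as [->|Hv].
  - rewrite (ip_zerol h); lra.
  - destruct h as (_&_&_&h). specialize (h v Hv); lra.
Qed.
Lemma ip_eq0 {n} {ip : vec n -> vec n -> R} (h : is_inner_product ip) v :
  ip v v <= 0 -> v = vzero.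
Proof.
  intro H. destruct (classic (v = vzero)) as [->|Hv]; auto.
  destruct h as (_&_&_&h). specialize (h v Hv); lra.
Qed.
Lemma ip_expand {n} {ip : vec n -> vec n -> R} (h : is_inner_product ip) u w t :
  ip (vadd u (vscal t w)) (vadd u (vscal t w)) = ip u u + 2 * t * ip u w + t * t * ip w w.
Proof.
  rewrite (ip_addl h), !(ip_addr h), !(ip_scall h), !(ip_scalr h), (ip_sym h w u). ring.
Qed.
Lemma euclid_sq {n} {ip : vec n -> vec n -> R} (h : is_inner_product ip) v :
  euclid ip v * euclid ip v = ip v v.
Proof. unfold euclid. apply sqrt_sqrt, (ip_nonneg h). Qed.
Lemma euclid_nonneg {n} (ip : vec n -> vec n -> R) v : 0 <= euclid ip v.
Proof. apply sqrt_pos. Qed.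

Lemma X_zero {n} {X : vec n -> R} (hX : is_norm X) : X vzero = 0.
Proof.
  replace (@vzero n) with (vscal 0 (@vzero n)) by (vext; ring).
  destruct hX as (_&hX&_). rewrite hX, Rabs_R0; ring.
Qed.
Lemma X_nonneg {n} {X : vec n -> R} (hX : is_norm X) v : 0 <= X v.
Proof.
  pose proof (X_zero hX) as H0.
  replace (@vzero n) with (vadd v (vscal (-1) v)) in H0 by (vext; ring).
  destruct hX as (_&hs&ht). pose proof (ht v (vscal (-1) v)) as T.
  rewrite hs in T. rewrite Rabs_left in T by lra. lra.
Qed.
Lemma X_conv {n} {X : vec n -> R} (hX : is_norm X) s t u v : 0 <= s -> 0 <= t ->
  X (vadd (vscal s u) (vscal t v)) <= s * X u + t * X v.
Proof.
  intros Hs Ht. destruct hX as (_&hs&ht).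
  eapply Rle_trans; [apply ht|]. rewrite !hs, !Rabs_pos_eq by lra. lra.
Qed.
Lemma X_pos {n} {X : vec n -> R} (hX : is_norm X) v : v <> vzero -> 0 < X v.
Proof.
  intro Hv. destruct (Rle_lt_or_eq_dec 0 (X v) (X_nonneg hX v)); auto.
  exfalso; apply Hv; apply hX; auto.
Qed.

Lemma CS_XY {n} {ip : vec n -> vec n -> R} {X Y} (h : is_inner_product ip) (hX : is_norm X)
  (hY : is_dual_norm ip X Y) v w : ip v w <= X w * Y v.
Proof.
  destruct (classic (w = vzero)) as [->|Hw].
  - rewrite (ip_zeror h), (X_zero hX). lra.
  - pose proof (X_pos hX w Hw) as Hp.
    assert (H1 : X (vscal (/ X w) w) = 1).
    { destruct hX as (_&hs&_). rewrite hs, Rabs_pos_eq.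
      field; lra. left; apply Rinv_0_lt_compat; auto. }
    destruct (hY v) as [_ Hm]. specialize (Hm _ H1).
    rewrite (ip_scalr h) in Hm.
    apply Rmult_le_compat_l with (r := X w) in Hm; [|lra].
    rewrite <- Rmult_assoc, Rinv_r in Hm; lra.
Qed.
Lemma Y_nonneg {n} {ip : vec n -> vec n -> R} {X Y} (h : is_inner_product ip) (hX : is_norm X)
  (hY : is_dual_norm ip X Y) v : 0 <= Y v.
Proof.
  destruct (hY v) as [[w [Hw _]] Hm].
  assert (H1 : X (vscal (-1) w) = 1).
  { destruct hX as (_&hs&_). rewrite hs, Rabs_left by lra; lra. }
  pose proof (Hm w Hw). pose proof (Hm _ H1). rewrite (ip_scalr h) in *. lra.
Qed.
Lemma Y_conv {n} {ip : vec n -> vec n -> R} {X Y} (h : is_inner_product ip)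
  (hY : is_dual_norm ip X Y) s t u v : 0 <= s -> 0 <= t ->
  Y (vadd (vscal s u) (vscal t v)) <= s * Y u + t * Y v.
Proof.
  intros Hs Ht. destruct (hY (vadd (vscal s u) (vscal t v))) as [[w [Hw Hw2]] _].
  rewrite <- Hw2, (ip_addl h), !(ip_scall h).
  pose proof (proj2 (hY u) w Hw). pose proof (proj2 (hY v) w Hw). nra.
Qed.

Lemma decomp_d {n} (a b a' b' : vec n) : vadd a b = vadd a' b' ->
  a' = vadd a (vscal 1 (vadd a' (vscal (-1) a))) /\
  b' = vadd b (vscal (-1) (vadd a' (vscal (-1) a))).
Proof.
  intro H. split; vext; try ring.
  pose proof (equal_f H i) as Hi. unfold vadd in Hi. lra.
Qed.

Lemma three_one {n} {ip : vec n -> vec n -> R} {X Y} (h : is_inner_product ip) (hX : is_norm X)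
  (hY : is_dual_norm ip X Y) c a b : c = vadd a b -> ip a b = X a * Y b ->
  is_PQ_decomposition X (euclid ip) c a b.
Proof.
  intros hc H3. split; auto. intros a' b' Hc'.
  destruct (Rlt_or_le (X a) (X a')) as [Hl|Hl]; [left; lra|].
  destruct (Rlt_or_le (euclid ip b) (euclid ip b')) as [Hl2|Hl2]; [right; left; lra|].
  right; right.
  rewrite hc in Hc'. destruct (decomp_d a b a' b' Hc') as [Ea Eb].
  set (d := vadd a' (vscal (-1) a)) in *.
  assert (Hbd : ip b d <= 0).
  { unfold d. rewrite (ip_addr h), (ip_scalr h), (ip_sym h b a), H3.
    pose proof (CS_XY h hX hY b a'). pose proof (Y_nonneg h hX hY b). nra. }
  assert (Hb' : ip b' b' = ip b b - 2 * ip b d + ip d d).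
  { rewrite Eb, (ip_expand h). ring. }
  pose proof (euclid_sq h b) as S1. pose proof (euclid_sq h b') as S2.
  pose proof (euclid_nonneg ip b) as N1. pose proof (euclid_nonneg ip b') as N2.
  pose proof (ip_nonneg h d).
  assert (Hd : d = vzero) by (apply (ip_eq0 h); nra).
  assert (a' = a) by (rewrite Ea, Hd; vext; ring).
  assert (b' = b) by (rewrite Eb, Hd; vext; ring).
  split; congruence.
Qed.

Lemma three_two {n} {ip : vec n -> vec n -> R} {X Y} (h : is_inner_product ip) (hX : is_norm X)
  (hY : is_dual_norm ip X Y) c a b : c = vadd a b -> ip a b = X a * Y b ->
  is_PQ_decomposition (euclid ip) Y c a b.
Proof.
  intros hc H3. split; auto. intros a' b' Hc'.
  destruct (Rlt_or_le (euclid ip a) (euclid ip a')) as [Hl|Hl]; [left; lra|].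
  destruct (Rlt_or_le (Y b) (Y b')) as [Hl2|Hl2]; [right; left; lra|].
  right; right.
  rewrite hc in Hc'. destruct (decomp_d a b a' b' Hc') as [Ea Eb].
  set (d := vadd a' (vscal (-1) a)) in *.
  assert (Had : 0 <= ip a d).
  { assert (E : ip a b' = ip a b - ip a d) by (rewrite Eb, (ip_addr h), (ip_scalr h); ring).
    pose proof (CS_XY h hX hY b' a). rewrite (ip_sym h b' a) in H.
    pose proof (X_nonneg hX a). nra. }
  assert (Ha' : ip a' a' = ip a a + 2 * ip a d + ip d d).
  { rewrite Ea, (ip_expand h). ring. }
  pose proof (euclid_sq h a) as S1. pose proof (euclid_sq h a') as S2.
  pose proof (euclid_nonneg ip a) as N1. pose proof (euclid_nonneg ip a') as N2.
  pose proof (ip_nonneg h d).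
  assert (Hd : d = vzero) by (apply (ip_eq0 h); nra).
  assert (a' = a) by (rewrite Ea, Hd; vext; ring).
  assert (b' = b) by (rewrite Eb, Hd; vext; ring).
  split; congruence.
Qed.

Lemma ip_le_XY {n} {ip : vec n -> vec n -> R} {X Y} (h : is_inner_product ip) (hX : is_norm X)
  (hY : is_dual_norm ip X Y) a b : ip a b <= X a * Y b.
Proof. rewrite (ip_sym h). apply (CS_XY h hX hY). Qed.

Lemma t_choice s q : 0 < s -> 0 <= q ->
  let t := s / (s + q) in 0 < t /\ t <= 1 /\ t * q < s.
Proof.
  intros Hs Hq t. unfold t. repeat split.
  - apply Rdiv_lt_0_compat; lra.
  - apply Rmult_le_reg_r with (s + q); [lra|]. unfold Rdiv. rewrite Rmult_assoc, Rinv_l by lra. lra.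
  - apply Rmult_lt_reg_r with (s + q); [lra|]. unfold Rdiv.
    replace (s * / (s + q) * q * (s + q)) with (s * q * ((s+q) * / (s+q))) by ring.
    rewrite Rinv_r by lra. nra.
Qed.

Lemma one_three {n} {ip : vec n -> vec n -> R} {X Y} (h : is_inner_product ip) (hX : is_norm X)
  (hY : is_dual_norm ip X Y) c a b :
  is_PQ_decomposition X (euclid ip) c a b -> ip a b = X a * Y b.
Proof.
  intros [hc H1]. pose proof (ip_le_XY h hX hY a b) as Hle.
  destruct (Rle_lt_or_eq_dec _ _ Hle) as [Hlt|]; auto. exfalso.
  destruct (hY b) as [[w [Hw Hbw]] _].
  set (u := vadd (vscal (X a) w) (vscal (-1) a)).
  assert (Hs : ip b u = X a * Y b - ip a b).
  { unfold u. rewrite (ip_addr h), !(ip_scalr h), Hbw, (ip_sym h b a). ring. }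
  destruct (t_choice (ip b u) (ip u u) ltac:(lra) (ip_nonneg h u)) as (Ht0 & Ht1 & Ht2).
  set (t := ip b u / (ip b u + ip u u)) in *.
  specialize (H1 (vadd a (vscal t u)) (vadd b (vscal (- t) u))).
  assert (Hc : c = vadd (vadd a (vscal t u)) (vadd b (vscal (- t) u))) by (rewrite hc; vext; ring).
  specialize (H1 Hc).
  assert (HX : X (vadd a (vscal t u)) <= X a).
  { replace (vadd a (vscal t u)) with (vadd (vscal (1 - t) a) (vscal (t * X a) w))
      by (unfold u; vext; ring).
    pose proof (X_nonneg hX a).
    eapply Rle_trans; [apply (X_conv hX); nra|]. rewrite Hw. nra. }
  assert (HE : ip (vadd b (vscal (- t) u)) (vadd b (vscal (- t) u)) < ip b b).
  { rewrite (ip_expand h). nra. }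
  pose proof (euclid_sq h b) as S1. pose proof (euclid_sq h (vadd b (vscal (- t) u))) as S2.
  pose proof (euclid_nonneg ip b) as N1. pose proof (euclid_nonneg ip (vadd b (vscal (- t) u))) as N2.
  destruct H1 as [H1|[H1|[_ H1]]].
  - lra.
  - nra.
  - rewrite H1 in S2. lra.
Qed.

Fixpoint in_span {n} (L : list (vec n)) (x : vec n) : Prop :=
  match L with
  | nil => x = vzero
  | cons l L' => exists c y, in_span L' y /\ x = vadd (vscal c l) y
  end.

Definition ebasis {n} (i : Fin.t n) : vec n := fun j => if Fin.eq_dec j i then 1 else 0.

Fixpoint fin_enum (n : nat) : list (Fin.t n) :=
  match n with 0 => nil | S m => cons Fin.F1 (map Fin.FS (fin_enum m)) end.

Lemma fin_enum_all n (i : Fin.t n) : In i (fin_enum n).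
Proof. induction i; simpl; [left | right; apply in_map]; auto. Qed.

Lemma span_support n (I : list (Fin.t n)) (x : vec n) :
  (forall j, ~ In j I -> x j = 0) -> in_span (map ebasis I) x.
Proof.
  revert x. induction I as [|i I IH]; intros x Hx; simpl.
  - vext. apply Hx. auto.
  - exists (x i), (fun j => if Fin.eq_dec j i then 0 else x j). split.
    + apply IH. intros j Hj. destruct (Fin.eq_dec j i); auto.
      apply Hx. simpl. intros [E|E]; auto.
    + vext. unfold ebasis. destruct (Fin.eq_dec i0 i); [subst; ring|ring].
Qed.

Lemma full_span n : exists L : list (vec n), forall x, in_span L x.
Proof.
  exists (map ebasis (fin_enum n)). intro x. apply span_support.
  intros j Hj. exfalso. apply Hj, fin_enum_all.
Qed.

Fixpoint proj {n} (ip : vec n -> vec n -> R) (O : list (vec n)) (x : vec n) : vec n :=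
  match O with nil => vzero | cons o O' => vadd (vscal (ip x o) o) (proj ip O' x) end.

Fixpoint orthonormal {n} (ip : vec n -> vec n -> R) (O : list (vec n)) : Prop :=
  match O with
  | nil => True
  | cons o O' => ip o o = 1 /\ (forall o', In o' O' -> ip o o' = 0) /\ orthonormal ip O'
  end.

Lemma proj_orth {n} {ip : vec n -> vec n -> R} (h : is_inner_product ip) O x z :
  (forall o, In o O -> ip o z = 0) -> ip (proj ip O x) z = 0.
Proof.
  induction O as [|o O IH]; intro Hz; simpl.
  - apply (ip_zerol h).
  - rewrite (ip_addl h), (ip_scall h), Hz by (left; auto).
    rewrite IH by (intros; apply Hz; right; auto). ring.
Qed.

Lemma proj_lin {n} {ip : vec n -> vec n -> R} (h : is_inner_product ip) O c l y :
  proj ip O (vadd (vscal c l) y) = vadd (vscal c (proj ip O l)) (proj ip O y).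
Proof.
  induction O as [|o O IH]; simpl.
  - vext; ring.
  - rewrite IH. rewrite (ip_addl h), (ip_scall h). vext. ring.
Qed.

Lemma gram_schmidt {n} {ip : vec n -> vec n -> R} (h : is_inner_product ip) (L : list (vec n)) :
  exists O, orthonormal ip O /\ forall x, in_span L x -> proj ip O x = x.
Proof.
  induction L as [|l L IH].
  - exists nil. split; [exact I|]. intros x Hx. simpl in Hx. rewrite Hx. reflexivity.
  - destruct IH as [O [HO HP]].
    set (r := vadd l (vscal (-1) (proj ip O l))).
    assert (Hro : forall o, In o O -> ip r o = 0).
    { intros o Ho. unfold r. rewrite (ip_addl h), (ip_scall h).
      clear HP. induction O as [|o1 O IHO]; [destruct Ho|].
      destruct HO as (H1 & H2 & H3). simpl.
      destruct Ho as [<-|Ho].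
      + rewrite (ip_addl h), (ip_scall h), H1, (proj_orth h).
        * ring.
        * intros o' Ho'. rewrite (ip_sym h). auto.
      + rewrite (ip_addl h), (ip_scall h), (ip_sym h o1 o), (ip_sym h o o1), H2 by auto.
        specialize (IHO H3 Ho). simpl in IHO. lra. }
    destruct (classic (r = vzero)) as [Hr|Hr].
    + exists O. split; auto. intros x (c & y & Hy & ->).
      rewrite (proj_lin h), (HP y Hy).
      assert (El : proj ip O l = l).
      { vext. pose proof (equal_f Hr i) as Hi. unfold r, vadd, vscal, vzero in Hi. lra. }
      rewrite El. reflexivity.
    + assert (Hpos : 0 < ip r r) by (destruct h as (_&_&_&h); auto).
      set (s := / sqrt (ip r r)).
      assert (Hs : s * s * ip r r = 1).
      { unfold s. rewrite <- Rinv_mult, sqrt_sqrt by lra. field. lra. }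
      set (o := vscal s r).
      exists (cons o O). split.
      * simpl. split; [|split; auto].
        -- unfold o. rewrite (ip_scall h), (ip_scalr h). lra.
        -- intros o' Ho'. unfold o. rewrite (ip_scall h), Hro by auto. ring.
      * intros x (c & y & Hy & ->). simpl.
        rewrite (proj_lin h), (HP y Hy).
        assert (Hyo : ip y o = 0).
        { rewrite <- (HP y Hy). apply (proj_orth h). intros o' Ho'.
          unfold o. rewrite (ip_sym h), (ip_scall h), Hro by auto. ring. }
        assert (Hlo : ip l o = s * ip r r).
        { replace l with (vadd r (vscal 1 (proj ip O l))) at 1 by (unfold r; vext; ring).
          rewrite (ip_addl h), (ip_scall h), (proj_orth h).
          - unfold o. rewrite (ip_scalr h). ring.
          - intros o' Ho'. unfold o. rewrite (ip_scalr h), (ip_sym h), Hro by auto. ring. }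
        rewrite (ip_addl h), (ip_scall h), Hyo, Hlo.
        unfold o, r. vext.
        transitivity (c * (s * s * ip r r) * (l i - proj ip O l i) + (c * proj ip O l i + y i)).
        { unfold r, vadd, vscal. ring. }
        rewrite Hs. ring.
Qed.

Fixpoint sumf {n} (f : vec n -> R) (O : list (vec n)) : R :=
  match O with nil => 0 | cons o O' => f o + sumf f O' end.

Lemma sumf_le {n} (f g : vec n -> R) O : (forall o, In o O -> f o <= g o) -> sumf f O <= sumf g O.
Proof. induction O; simpl; intros H; [lra|]. pose proof (H a (or_introl eq_refl)).
  assert (sumf f O <= sumf g O) by (apply IHO; auto). lra. Qed.

Lemma sumf_scal {n} (f : vec n -> R) c O : sumf (fun o => c * f o) O = c * sumf f O.
Proof. induction O; simpl; [ring|]. rewrite IHO; ring. Qed.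

Lemma sumf0 {n} (O : list (vec n)) : sumf (fun _ => 0) O = 0.
Proof. induction O; simpl; lra. Qed.

Lemma ip_proj {n} {ip : vec n -> vec n -> R} (h : is_inner_product ip) O x :
  ip x (proj ip O x) = sumf (fun o => ip x o * ip x o) O.
Proof. induction O; simpl. apply (ip_zeror h). rewrite (ip_addr h), (ip_scalr h), IHO; ring. Qed.

Lemma X_proj {n} {ip : vec n -> vec n -> R} {X} (hX : is_norm X) O x :
  X (proj ip O x) <= sumf (fun o => Rabs (ip x o) * X o) O.
Proof.
  induction O; simpl. rewrite (X_zero hX); lra.
  destruct hX as (h1&h2&h3). eapply Rle_trans; [apply h3|]. rewrite h2. lra.
Qed.

Lemma coef_bound {n} {ip : vec n -> vec n -> R} (h : is_inner_product ip) x o :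
  ip o o = 1 -> ip x o * ip x o <= ip x x.
Proof.
  intro Ho. pose proof (ip_nonneg h (vadd x (vscal (- ip x o) o))) as H.
  rewrite (ip_expand h), Ho in H. nra.
Qed.

Lemma coef_abs {n} {ip : vec n -> vec n -> R} (h : is_inner_product ip) x o :
  ip o o = 1 -> Rabs (ip x o) <= euclid ip x.
Proof.
  intro Ho. pose proof (coef_bound h x o Ho). pose proof (euclid_sq h x).
  pose proof (euclid_nonneg ip x).
  destruct (Rle_or_lt 0 (ip x o)).
  - rewrite Rabs_pos_eq by lra. nra.
  - rewrite Rabs_left by lra. nra.
Qed.

Lemma orth_in {n} {ip : vec n -> vec n -> R} O o : orthonormal ip O -> In o O -> ip o o = 1.
Proof. induction O; simpl; [tauto|]. intros (H1&_&H3) [<-|Hi]; auto. Qed.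

Lemma N2 {n} {ip : vec n -> vec n -> R} {X} (h : is_inner_product ip) (hX : is_norm X) :
  exists S, forall x, X x <= euclid ip x * S.
Proof.
  destruct (full_span n) as [L HL]. destruct (gram_schmidt h L) as [O [HO HP]].
  exists (sumf X O). intro x. rewrite <- (HP x (HL x)) at 1.
  eapply Rle_trans; [apply (X_proj hX)|]. rewrite <- sumf_scal. apply sumf_le.
  intros o Ho. apply Rmult_le_compat_r; [apply (X_nonneg hX)|]. apply (coef_abs h).
  eapply orth_in; eauto.
Qed.

Lemma N1 {n} {ip : vec n -> vec n -> R} {X Y} (h : is_inner_product ip) (hX : is_norm X)
  (hY : is_dual_norm ip X Y) :
  exists K, 0 <= K /\ forall w, X w <= 1 -> ip w w <= K.
Proof.
  destruct (full_span n) as [L HL]. destruct (gram_schmidt h L) as [O [HO HP]].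
  exists (sumf (fun o => Y o * Y o + Y (vscal (-1) o) * Y (vscal (-1) o)) O). split.
  - replace 0 with (sumf (fun _ : vec n => 0) O) by apply sumf0. apply sumf_le. intros o _.
    pose proof (Y_nonneg h hX hY o). pose proof (Y_nonneg h hX hY (vscal (-1) o)). nra.
  - intros w Hw. rewrite <- (HP w (HL w)) at 2. rewrite (ip_proj h). apply sumf_le.
    intros o _. pose proof (CS_XY h hX hY o w). pose proof (CS_XY h hX hY (vscal (-1) o) w).
    rewrite (ip_scall h) in H0. rewrite (ip_sym h w o).
    pose proof (Y_nonneg h hX hY o). pose proof (Y_nonneg h hX hY (vscal (-1) o)).
    pose proof (X_nonneg hX w).
    assert (ip o w <= Y o) by nra. assert (- ip o w <= Y (vscal (-1) o)) by nra.
    destruct (Rle_or_lt 0 (ip o w)); nra.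
Qed.

Lemma key {n} {ip : vec n -> vec n -> R} {X Y} (h : is_inner_product ip) (hX : is_norm X)
  (hY : is_dual_norm ip X Y) (a : vec n) : 1 < X a -> exists v, Y v < ip a v.
Proof.
  intro Ha.
  destruct (N2 h hX) as [S HS]. destruct (N1 h hX hY) as [K [HK0 HK]].
  set (m := X a - 1).
  assert (HSp : 0 < S) by (pose proof (HS a); pose proof (euclid_nonneg ip a); nra).
  set (D := fun w : vec n => vadd a (vscal (-1) w)).
  assert (Hlow : forall w, X w <= 1 -> m * m <= S * S * ip (D w) (D w)).
  { intros w Hw. assert (E : a = vadd (D w) w) by (unfold D; vext; ring).
    pose proof (proj2 (proj2 hX) (D w) w) as T. rewrite <- E in T.
    pose proof (HS (D w)). pose proof (euclid_sq h (D w)). pose proof (euclid_nonneg ip (D w)).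
    assert (m <= euclid ip (D w) * S) by (unfold m; lra).
    assert (0 <= m) by (unfold m; lra). nra. }
  set (E := fun s => exists w, X w <= 1 /\ s = - ip (D w) (D w)).
  assert (Hb : bound E).
  { exists 0. intros s (w & _ & ->). pose proof (ip_nonneg h (D w)). lra. }
  assert (Hne : exists s, E s).
  { exists (- ip (D vzero) (D vzero)). exists vzero. split; auto. rewrite (X_zero hX); lra. }
  destruct (completeness E Hb Hne) as [Lb [Hub Hleast]].
  set (d2 := - Lb).
  assert (FA : forall w, X w <= 1 -> d2 <= ip (D w) (D w)).
  { intros w Hw. assert (E0 : E (- ip (D w) (D w))) by (exists w; auto).
    pose proof (Hub _ E0). unfold d2. lra. }
  assert (FC : 0 < d2).
  { assert (Hm : 0 < m) by (unfold m; lra).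
    assert (U : is_upper_bound E (- (m * m / (S * S)))).
    { intros s (w & Hw & ->). pose proof (Hlow w Hw).
      assert (m * m / (S * S) <= ip (D w) (D w)).
      { apply Rmult_le_reg_r with (S * S). nra.
        replace (m * m / (S * S) * (S * S)) with (m * m) by (field; lra). lra. }
      lra. }
    pose proof (Hleast _ U).
    assert (0 < m * m / (S * S)) by (apply Rdiv_lt_0_compat; nra).
    unfold d2; lra. }
  assert (FB : forall eps, 0 < eps -> exists w, X w <= 1 /\ ip (D w) (D w) < d2 + eps).
  { intros eps He. apply NNPP. intro Hn.
    assert (U : is_upper_bound E (Lb - eps)).
    { intros s (w & Hw & ->). destruct (Rlt_or_le (ip (D w) (D w)) (d2 + eps)).
      - exfalso; apply Hn; exists w; auto.
      - unfold d2 in *; lra. }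
    pose proof (Hleast _ U). lra. }
  destruct (t_choice d2 (4 * K) FC ltac:(lra)) as (Ht0 & Ht1 & Ht2).
  set (t := d2 / (d2 + 4 * K)) in *.
  destruct (FB (t * d2) ltac:(nra)) as (q & Hq & Hqd).
  set (v := D q) in *.
  destruct (hY v) as [[ws [Hws Hvws]] _].
  set (z := vadd ws (vscal (-1) q)).
  assert (Hqt : X (vadd q (vscal t z)) <= 1).
  { replace (vadd q (vscal t z)) with (vadd (vscal (1 - t) q) (vscal t ws)) by (unfold z; vext; ring).
    eapply Rle_trans; [apply (X_conv hX); lra|]. nra. }
  pose proof (FA _ Hqt) as F1.
  replace (D (vadd q (vscal t z))) with (vadd v (vscal (- t) z)) in F1 by (unfold v, D, z; vext; ring).
  rewrite (ip_expand h) in F1.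
  assert (Hzz : ip z z <= 4 * K).
  { pose proof (ip_nonneg h (vadd ws (vscal 1 q))). rewrite (ip_expand h) in H.
    unfold z. rewrite (ip_expand h). pose proof (HK ws ltac:(lra)). pose proof (HK q Hq). nra. }
  pose proof (FA q Hq) as F2. fold v in F2.
  assert (t * t * ip z z <= t * d2).
  { assert (t * ip z z <= t * (4 * K)) by (apply Rmult_le_compat_l; lra). nra. }
  assert (Hvz : ip v z < d2) by nra.
  exists v.
  assert (Ea : a = vadd q (vscal 1 v)) by (unfold v, D; vext; ring).
  assert (Ew : ws = vadd q (vscal 1 z)) by (unfold z; vext; ring).
  rewrite <- Hvws, Ew, (ip_sym h a), Ea at 1.
  rewrite !(ip_addr h), !(ip_scalr h). lra.
Qed.

Lemma two_three {n} {ip : vec n -> vec n -> R} {X Y} (h : is_inner_product ip) (hX : is_norm X)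
  (hY : is_dual_norm ip X Y) c a b :
  is_PQ_decomposition (euclid ip) Y c a b -> ip a b = X a * Y b.
Proof.
  intros [hc H1]. pose proof (ip_le_XY h hX hY a b) as Hle.
  destruct (Rle_lt_or_eq_dec _ _ Hle) as [Hlt|]; auto. exfalso.
  assert (Hex : exists v lam, 0 <= lam /\ lam * Y v <= Y b /\ ip a b < lam * ip a v).
  { pose proof (Y_nonneg h hX hY b) as Yb0.
    assert (HYb : 0 < Y b).
    { destruct (Rle_lt_or_eq_dec _ _ Yb0) as [|E]; auto. exfalso.
      pose proof (ip_le_XY h hX hY (vscal (-1) a) b). rewrite (ip_scall h) in H.
      rewrite <- E in *. lra. }
    destruct (Rle_or_lt (ip a b) 0) as [Hn|Hp].
    - assert (Ha0 : a <> vzero).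
      { intros ->. rewrite (ip_zerol h), (X_zero hX) in Hlt. lra. }
      assert (Haa : 0 < ip a a) by (destruct h as (_&_&_&h); auto).
      pose proof (Y_nonneg h hX hY a).
      exists a, (Y b / (Y a + 1)).
      assert (El : Y b / (Y a + 1) * (Y a + 1) = Y b) by (field; lra).
      assert (0 < Y b / (Y a + 1)) by (apply Rdiv_lt_0_compat; lra).
      split; [lra|]. split; nra.
    - set (k := Y b / ip a b).
      assert (Hk : k * ip a b = Y b) by (unfold k; field; lra).
      assert (Hk0 : 0 < k) by (apply Rdiv_lt_0_compat; lra).
      destruct (key h hX hY (vscal k a)) as [v Hv].
      { destruct hX as (_&hs&_). rewrite hs, Rabs_pos_eq by lra. nra. }
      rewrite (ip_scall h) in Hv.
      pose proof (Y_nonneg h hX hY v) as Yv0.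
      destruct (Rle_lt_or_eq_dec _ _ Yv0) as [Yvp|Yv].
      + exists v, (Y b / Y v).
        assert (El : Y b / Y v * Y v = Y b) by (field; lra).
        assert (0 < Y b / Y v) by (apply Rdiv_lt_0_compat; lra).
        split; [lra|]. split; [lra|].
        assert (Y b / Y v * Y v < Y b / Y v * (k * ip a v)) by (apply Rmult_lt_compat_l; lra).
        nra.
      + rewrite <- Yv in Hv.
        assert (Hp2 : 0 < ip a v) by nra.
        exists v, ((ip a b + 1) / ip a v).
        assert (El : (ip a b + 1) / ip a v * ip a v = ip a b + 1) by (field; lra).
        assert (0 < (ip a b + 1) / ip a v) by (apply Rdiv_lt_0_compat; lra).
        rewrite <- Yv. split; [lra|]. split; lra. }
  destruct Hex as (v & lam & Hl0 & Hl1 & Hl2).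
  set (u := vadd (vscal lam v) (vscal (-1) b)).
  assert (Hs : ip a u = lam * ip a v - ip a b).
  { unfold u. rewrite (ip_addr h), !(ip_scalr h). ring. }
  destruct (t_choice (ip a u) (ip u u) ltac:(lra) (ip_nonneg h u)) as (Ht0 & Ht1 & Ht2).
  set (t := ip a u / (ip a u + ip u u)) in *.
  specialize (H1 (vadd a (vscal (- t) u)) (vadd b (vscal t u))).
  assert (Hc : c = vadd (vadd a (vscal (- t) u)) (vadd b (vscal t u))) by (rewrite hc; vext; ring).
  specialize (H1 Hc).
  assert (HY : Y (vadd b (vscal t u)) <= Y b).
  { replace (vadd b (vscal t u)) with (vadd (vscal (1 - t) b) (vscal (t * lam) v))
      by (unfold u; vext; ring).
    pose proof (Y_nonneg h hX hY b). pose proof (Y_nonneg h hX hY v).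
    eapply Rle_trans; [apply (Y_conv h hY); nra|]. nra. }
  assert (HE : ip (vadd a (vscal (- t) u)) (vadd a (vscal (- t) u)) < ip a a).
  { rewrite (ip_expand h). nra. }
  pose proof (euclid_sq h a) as S1. pose proof (euclid_sq h (vadd a (vscal (- t) u))) as S2.
  pose proof (euclid_nonneg ip a) as N1. pose proof (euclid_nonneg ip (vadd a (vscal (- t) u))) as N2.
  destruct H1 as [H1|[H1|[H1 _]]].
  - nra.
  - lra.
  - rewrite H1 in S2. lra.
Qed.

Theorem proposition2p2 (n : nat) (ip : vec n -> vec n -> R)
  (X Y : vec n -> R)
  (hip : is_inner_product ip) (hX : is_norm X) (hY : is_dual_norm ip X Y)
  (c a b : vec n) (hc : c = vadd a b) :
  (is_PQ_decomposition X (euclid ip) c a b <->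
     is_PQ_decomposition (euclid ip) Y c a b) /\
  (is_PQ_decomposition (euclid ip) Y c a b <->
     ip a b = X a * Y b).
Proof.
  split; split; intro H.
  - apply (three_two hip hX hY); auto. eapply one_three; eauto.
  - apply (three_one hip hX hY); auto. eapply two_three; eauto.
  - eapply two_three; eauto.
  - apply (three_two hip hX hY); auto.
Qed.
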